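(* Let $f_d:\mathbb{R}^n\times\mathbb{R}^m\to\mathbb{R}^n$ and $g_d:\mathbb{R}^n\times\mathbb{R}^m\to\mathbb{R}$ be of class $C^1$, $\tau>0$, and $H_d(x,p,u)=g_d(x,u)+\langle p,f_d(x,u)\rangle$. Writing $x^d_k=\frac{x_{k+1}+x_k}{2}$, $p^d_k=\frac{p_{k+1}+p_k}{2}$, $u^d_k=\frac{u_{k+1}+u_k}{2}$, consider the midpoint discrete necessary conditions for optimality $$\frac{x_{k+1}-x_k}{\tau}=D_2H_d(x^d_k,p^d_k,u^d_k),\quad \frac{p_{k+1}-p_k}{\tau}=-D_1H_d(x^d_k,p^d_k,u^d_k),\quad 0=D_3H_d(x^d_k,p^d_k,u^d_k).$$ Let $W\subset\mathbb{R}^{2n}$ be open and let $F:W\to\mathbb{R}^{2n}$ and $w:W\to\mathbb{R}^m$ be $C^1$ maps such that for every $(x_k,p_k)\in W$, with $(x_{k+1},p_{k+1})=F(x_k,p_k)$ and $u^d_k=w(x_k,p_k)$, these equations hold. Then $F$ is symplectic: $F^*\big(\sum_i dp_i\wedge dx^i\big)=\sum_i dp_i\wedge dx^i$.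
   Context: These equations arise from the discrete optimal control problem of minimizing $\sum_{k=0}^{n-1}g_d(x^d_k,u^d_k)\tau$ subject to $(x_{k+1}-x_k)/\tau=f_d(x^d_k,u^d_k)$, using the midpoint discretization. *)

(* Defs.v *)
From HB Require Import structures.
From mathcomp Require Import all_boot all_order all_algebra.
From mathcomp Require Import all_classical all_reals all_analysis.
Set Implicit Arguments. Unset Strict Implicit. Unset Printing Implicit Defensive.
Import Order.TTheory GRing.Theory Num.Theory.
Import numFieldNormedType.Exports.
Local Open Scope classical_set_scope.
Local Open Scope ring_scope.

Definition dotrv {R : realType} {k : nat} (a b : 'rV[R]_k) : R :=
  \sum_(i < k) a 0 i * b 0 i.

Definition gradrv {R : realType} {k : nat} (h : 'rV[R]_k -> R) (a : 'rV[R]_k)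
  : 'rV[R]_k := \row_(i < k) ('d h a (delta_mx 0 i : 'rV[R]_k)).

Definition C1 {R : realType} {U V : normedModType R} (f : U -> V) : Prop :=
  (forall z, differentiable f z) /\ (forall v : U, continuous (fun z => 'd f z v)).

Definition C1_on {R : realType} {U V : normedModType R} (W : set U) (f : U -> V)
  : Prop :=
  (forall z, W z -> differentiable f z) /\
  (forall v : U, forall z, W z -> {for z, continuous (fun y => 'd f y v)}).

Definition Hd {R : realType} {n m : nat}
  (fd : 'rV[R]_n * 'rV[R]_m -> 'rV[R]_n) (gd : 'rV[R]_n * 'rV[R]_m -> R)
  (x p : 'rV[R]_n) (u : 'rV[R]_m) : R :=
  gd (x, u) + dotrv p (fd (x, u)).

(* Canonical 2-form  sum_i dp_i /\ dx^i  on R^n x R^n (coordinates (x,p)):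
   (sum_i dp_i /\ dx^i)(v, w) = <v_p, w_x> - <w_p, v_x>. *)
Definition omega {R : realType} {n : nat} (v w : 'rV[R]_n * 'rV[R]_n) : R :=
  dotrv v.2 w.1 - dotrv w.2 v.1.

Definition symplectic_on {R : realType} {n : nat}
  (W : set ('rV[R]_n * 'rV[R]_n))
  (F : 'rV[R]_n * 'rV[R]_n -> 'rV[R]_n * 'rV[R]_n) : Prop :=
  forall z, W z -> forall v w, omega ('d F z v) ('d F z w) = omega v w.

(* Main.v *)
Require Import Defs.
From HB Require Import structures.
From mathcomp Require Import all_boot all_order all_algebra.
From mathcomp Require Import all_classical all_reals all_analysis.
From mathcomp Require Import ring lra.
Import Order.TTheory GRing.Theory Num.Theory.
Import numFieldNormedType.Exports.
Local Open Scope classical_set_scope.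
Local Open Scope ring_scope.


Section OneD.
Context {R : realType}.

Lemma incr_bound (f df : R -> R) (a b M : R) : a <= b ->
  (forall x, a <= x <= b -> is_derive x 1 f (df x)) ->
  (forall x, a <= x <= b -> `|df x| <= M) -> `|f b - f a| <= M * (b - a).
Proof.
move=> ab fd dfM.
have hd : forall x, x \in `]a, b[%R -> is_derive x 1 f (df x).
  by move=> x; rewrite in_itv /= => /andP[/ltW h1 /ltW h2]; apply: fd; rewrite h1 h2.
have hc : {within `[a, b], continuous f}.
  apply: derivable_within_continuous => x; rewrite in_itv /= => /andP[h1 h2].
  by have := fd x; rewrite h1 h2 => /(_ isT) [].
have [c] := MVT_segment ab hd hc.
rewrite in_itv /= => /andP[h1 h2] ->.
rewrite normrM (ger0_norm (_ : 0 <= b - a)) ?subr_ge0 //.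
by rewrite ler_wpM2r ?subr_ge0 // dfM // h1 h2.
Qed.

Lemma line_is_derive (V : normedModType R) (A : V -> R) (P d : V) t :
  differentiable A (P + t *: d) ->
  is_derive t 1 (fun s => A (P + s *: d)) ('d A (P + t *: d) d).
Proof.
move=> dA.
have E : (fun h : R => h^-1 *: (((fun s => A (P + s *: d)) \o shift t) (h *: 1) - A (P + t *: d)))
  = (fun h : R => h^-1 *: ((A \o shift (P + t *: d)) (h *: d) - A (P + t *: d))).
  apply/funext => h /=; congr (_ *: (A _ - _)).
  by rewrite /shift /= scalerDl [_ *: 1]mulr1 addrCA addrA.
have hd : derivable A (P + t *: d) d by apply: diff_derivable.
split.
  by rewrite /derivable E.
by rewrite /derive E -deriveE.
Qed.

Lemma dD (f g : R -> R) (x df dg : R) : is_derive x 1 f df -> is_derive x 1 g dg ->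
  is_derive x 1 (fun y => f y + g y) (df + dg).
Proof. move=> h1 h2; exact: (is_deriveD h1 h2). Qed.

Lemma dB (f g : R -> R) (x df dg : R) : is_derive x 1 f df -> is_derive x 1 g dg ->
  is_derive x 1 (fun y => f y - g y) (df - dg).
Proof. move=> h1 h2; exact: (is_deriveB h1 h2). Qed.

Lemma dM (f g : R -> R) (x df dg : R) : is_derive x 1 f df -> is_derive x 1 g dg ->
  is_derive x 1 (fun y => f y * g y) (f x * dg + g x * df).
Proof. move=> h1 h2; exact: (is_deriveM h1 h2). Qed.

Lemma dC (c x : R) : is_derive x 1 (fun _ : R => c) 0.
Proof. exact: (is_derive_cst c x 1). Qed.

Lemma dL (c x : R) : is_derive x 1 (fun y : R => c * y) c.
Proof.
have h := is_deriveZ c (is_derive_id x (1 : R)).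
rewrite (_ : (fun y : R => c * y) = c \*: (@id R)); last by apply/funext.
refine (is_derive_eq h _).
by rewrite /= [_ *: _]mulr1.
Qed.

Lemma dS k (h : 'I_k -> R -> R) (x : R) (dh : 'I_k -> R) :
  (forall i, is_derive x 1 (h i) (dh i)) ->
  is_derive x 1 (fun y => \sum_(i < k) h i y) (\sum_(i < k) dh i).
Proof.
move=> H; have := is_derive_sum H.
have -> : (\sum_(i < k) h i) = (fun y => \sum_(i < k) h i y).
  by apply/funext => y; rewrite fct_sumE.
by [].
Qed.

Arguments dD {f g x df dg}.
Arguments dB {f g x df dg}.
Arguments dM {f g x df dg}.
Arguments dS {k h x dh}.

Lemma alg_bound (al be t de a b a' b' : R) : 0 <= t -> 0 <= de ->
  `|a - al * t| <= de * t -> `|b - be * t| <= de * t ->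
  `|a' - al| <= de -> `|b' - be| <= de ->
  `|a * b' - a' * b| <= 2 * (de * t) * (`|al| + `|be| + de).
Proof.
move=> t0 d0 h1 h4 h3 h2.
set e1 := a - al * t; set e2 := b' - be; set e3 := a' - al; set e4 := b - be * t.
have E : a * b' - a' * b = al * t * e2 + e1 * be + e1 * e2 - al * e4 - e3 * be * t - e3 * e4.
  by rewrite /e1 /e2 /e3 /e4; ring.
have n1 : `|al * t * e2| <= `|al| * t * de.
  by rewrite !normrM (ger0_norm t0) ler_wpM2l // mulr_ge0.
have n2 : `|e1 * be| <= de * t * `|be|.
  by rewrite normrM ler_wpM2r.
have n3 : `|e1 * e2| <= de * t * de.
  by rewrite normrM ler_pM.
have n4 : `|al * e4| <= `|al| * (de * t).
  by rewrite normrM ler_wpM2l.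
have n5 : `|e3 * be * t| <= de * `|be| * t.
  by rewrite !normrM (ger0_norm t0) ler_wpM2r // ler_wpM2r.
have n6 : `|e3 * e4| <= de * (de * t).
  by rewrite normrM ler_pM.
rewrite E.
set x1 := al * t * e2; set x2 := e1 * be; set x3 := e1 * e2; set x4 := al * e4;
  set x5 := e3 * be * t; set x6 := e3 * e4.
have t1 := ler_normB (x1 + x2 + x3 - x4 - x5) x6.
have t2 := ler_normB (x1 + x2 + x3 - x4) x5.
have t3 := ler_normB (x1 + x2 + x3) x4.
have t4 := ler_normD (x1 + x2) x3.
have t5 := ler_normD x1 x2.
have p1 : 0 <= `|al| * t * de by rewrite !mulr_ge0.
nra.
Qed.

Arguments alg_bound {al be t de a b a' b'}.

Lemma step1 (V : normedModType R) (A : V -> R) (P d : V) (h de al t : R) :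
  0 <= t <= h ->
  (forall s, 0 <= s <= h -> differentiable A (P + s *: d)) ->
  (forall s, 0 <= s <= h -> `|'d A (P + s *: d) d - al| <= de) ->
  `|A (P + t *: d) - A P - al * t| <= de * t.
Proof.
move=> /andP[t0 th] dA bA.
have := @incr_bound (fun s => A (P + s *: d) - al * s)
  (fun s => 'd A (P + s *: d) d - al) 0 t de t0.
rewrite scale0r addr0 mulr0 subr0 subr0.
have -> : A (P + t *: d) - al * t - A P = A (P + t *: d) - A P - al * t by ring.
apply.
  move=> x /andP[x0 xt]; apply: dB; last exact: dL.
  by apply: line_is_derive; apply: dA; rewrite x0 (le_trans xt th).
by move=> x /andP[x0 xt]; apply: bA; rewrite x0 (le_trans xt th).
Qed.

Lemma edge (V : normedModType R) (k : nat) (A B : 'I_k -> V -> R) (S : V -> R)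
  (P Q d : V) (h de : R) (al be : 'I_k -> R) :
  0 <= h -> 0 <= de -> Q = P + h *: d ->
  (forall t, 0 <= t <= h -> differentiable S (P + t *: d) /\
     (forall i, differentiable (A i) (P + t *: d) /\ differentiable (B i) (P + t *: d)) /\
     'd S (P + t *: d) d = \sum_(i < k) A i (P + t *: d) * 'd (B i) (P + t *: d) d) ->
  (forall i t, 0 <= t <= h -> `|'d (A i) (P + t *: d) d - al i| <= de /\
                              `|'d (B i) (P + t *: d) d - be i| <= de) ->
  `|S Q - S P - \sum_(i < k) 2^-1 * (A i P + A i Q) * (B i Q - B i P)|
     <= (\sum_(i < k) (`|al i| + `|be i| + de)) * de * h ^+ 2.
Proof.
move=> h0 d0 -> Hd Hb.
set K := \sum_(i < k) (`|al i| + `|be i| + de).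
have sA i t : 0 <= t <= h -> `|A i (P + t *: d) - A i P - al i * t| <= de * t.
  move=> th; apply: (@step1 V _ P d h) => //.
    by move=> s /Hd [_ [/(_ i) [] ]].
  by move=> s /(Hb i) [].
have sB i t : 0 <= t <= h -> `|B i (P + t *: d) - B i P - be i * t| <= de * t.
  move=> th; apply: (@step1 V _ P d h) => //.
    by move=> s /Hd [_ [/(_ i) [] ]].
  by move=> s /(Hb i) [].
pose psi s := S (P + s *: d) - \sum_(i < k) (A i P * (B i (P + s *: d) - B i P)
   + 2^-1 * ((A i (P + s *: d) - A i P) * (B i (P + s *: d) - B i P))).
pose dpsi s := \sum_(i < k) 2^-1 * ((A i (P + s *: d) - A i P) * 'd (B i) (P + s *: d) d
   - 'd (A i) (P + s *: d) d * (B i (P + s *: d) - B i P)).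
have := @incr_bound psi dpsi 0 h (de * h * K) h0.
have -> : psi h - psi 0 = S (P + h *: d) - S P -
    \sum_(i < k) 2^-1 * (A i P + A i (P + h *: d)) * (B i (P + h *: d) - B i P).
  rewrite /psi scale0r addr0.
  have -> : \sum_(i < k) (A i P * (B i P - B i P) + 2^-1 * ((A i P - A i P) * (B i P - B i P))) = 0.
    by rewrite big1 // => i _; rewrite !subrr !mulr0 addr0.
  rewrite subr0.
  have -> : \sum_(i < k) (A i P * (B i (P + h *: d) - B i P) +
       2^-1 * ((A i (P + h *: d) - A i P) * (B i (P + h *: d) - B i P))) =
     \sum_(i < k) 2^-1 * (A i P + A i (P + h *: d)) * (B i (P + h *: d) - B i P).
    by apply: eq_bigr => i _; field.
  ring.
have -> : de * h * K * (h - 0) = K * de * h ^+ 2 by rewrite subr0; ring.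
apply.
  move=> x xh.
  have [dSx [dABx eqx]] := Hd x xh.
  have hA i := @line_is_derive V (A i) P d x (proj1 (dABx i)).
  have hB i := @line_is_derive V (B i) P d x (proj2 (dABx i)).
  have h1 i := dM (dC (A i P) x) (dB (hB i) (dC (B i P) x)).
  have h2 i := dM (dC 2^-1 x) (dM (dB (hA i) (dC (A i P) x)) (dB (hB i) (dC (B i P) x))).
  have H := dB (@line_is_derive V S P d x dSx) (dS (fun i => dD (h1 i) (h2 i))).
  refine (is_derive_eq H _) => /=.
  rewrite eqx /dpsi -sumrB; apply: eq_bigr => i _; by field.
move=> x xh.
have [x0 xh'] := andP xh.
rewrite /dpsi.
apply: le_trans (ler_norm_sum _ _ _) _.
rewrite /K mulr_sumr; apply: ler_sum => i _.
have := alg_bound x0 d0 (sA i x xh) (sB i x xh) (proj1 (Hb i x xh)) (proj2 (Hb i x xh)).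
rewrite normrM ger0_norm ?invr_ge0 ?ler0n // => H.
have Hk : 0 <= `|al i| + `|be i| + de by rewrite !addr_ge0.
have : de * x * (`|al i| + `|be i| + de) <= de * h * (`|al i| + `|be i| + de).
  by rewrite ler_wpM2r // ler_wpM2l.
set L := `|_ * _ - _ * _| in H *.
move=> H2.
have H3 : 2^-1 * L <= 2^-1 * (2 * (de * x) * (`|al i| + `|be i| + de)).
  by rewrite ler_wpM2l // invr_ge0 ler0n.
apply: le_trans H3 _.
have -> : 2^-1 * (2 * (de * x) * (`|al i| + `|be i| + de)) = de * x * (`|al i| + `|be i| + de).
  by field.
exact: H2.
Qed.

Lemma alg2 (p1 q2 p2 q1 x1 y2 x2 y1 h de : R) : 0 <= h -> 0 <= de ->
  `|x1 - p1 * h| <= de * h -> `|y2 - q2 * h| <= de * h ->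
  `|x2 - p2 * h| <= de * h -> `|y1 - q1 * h| <= de * h ->
  `|(x1 * y2 - x2 * y1) - h ^+ 2 * (p1 * q2 - p2 * q1)|
    <= de * h ^+ 2 * (`|p1| + `|q2| + `|p2| + `|q1| + 2 * de).
Proof.
move=> h0 d0 H1 H2 H3 H4.
set e1 := x1 - p1 * h; set e2 := y2 - q2 * h; set e3 := x2 - p2 * h; set e4 := y1 - q1 * h.
have E : (x1 * y2 - x2 * y1) - h ^+ 2 * (p1 * q2 - p2 * q1) =
   p1 * h * e2 + e1 * (q2 * h) + e1 * e2 - p2 * h * e4 - e3 * (q1 * h) - e3 * e4.
  by rewrite /e1 /e2 /e3 /e4; ring.
have n1 : `|p1 * h * e2| <= `|p1| * h * (de * h).
  by rewrite !normrM (ger0_norm h0) ler_wpM2l // mulr_ge0.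
have n2 : `|e1 * (q2 * h)| <= de * h * (`|q2| * h).
  by rewrite normrM ler_pM // normrM (ger0_norm h0).
have n3 : `|e1 * e2| <= de * h * (de * h).
  by rewrite normrM ler_pM.
have n4 : `|p2 * h * e4| <= `|p2| * h * (de * h).
  by rewrite !normrM (ger0_norm h0) ler_wpM2l // mulr_ge0.
have n5 : `|e3 * (q1 * h)| <= de * h * (`|q1| * h).
  by rewrite normrM ler_pM // normrM (ger0_norm h0).
have n6 : `|e3 * e4| <= de * h * (de * h).
  by rewrite normrM ler_pM.
rewrite E.
set z1 := p1 * h * e2; set z2 := e1 * (q2 * h); set z3 := e1 * e2; set z4 := p2 * h * e4;
  set z5 := e3 * (q1 * h); set z6 := e3 * e4.
have t1 := ler_normB (z1 + z2 + z3 - z4 - z5) z6.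
have t2 := ler_normB (z1 + z2 + z3 - z4) z5.
have t3 := ler_normB (z1 + z2 + z3) z4.
have t4 := ler_normD (z1 + z2) z3.
have t5 := ler_normD z1 z2.
have -> : de * h ^+ 2 * (`|p1| + `|q2| + `|p2| + `|q1| + 2 * de) =
  `|p1| * h * (de * h) + de * h * (`|q2| * h) + de * h * (de * h) +
  `|p2| * h * (de * h) + de * h * (`|q1| * h) + de * h * (de * h) by ring.
lra.
Qed.

Arguments alg2 {p1 q2 p2 q1 x1 y2 x2 y1 h de}.

Lemma zero_of_small (C M : R) : 0 <= M ->
  (forall de, 0 < de -> de <= 1 -> `|C| <= 2 * de * M) -> C = 0.
Proof.
move=> M0 H; case: (eqVneq C 0) => // Cn0; exfalso.
have c0 : 0 < `|C| by rewrite normr_gt0.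
set c := `|C| in c0 H.
have D0 : 0 < 4 * M + 4 + c by lra.
have := H (c / (4 * M + 4 + c)).
rewrite divr_gt0 // ler_pdivrMr // mul1r.
have -> : c <= 4 * M + 4 + c = true by apply/idP; lra.
move=> /(_ isT isT).
rewrite mulrA mulrAC ler_pdivlMr //.
move=> H2.
have : c * (4 * M + 4 + c) <= c * (2 * M) by rewrite mulrC (mulrC c); lra.
rewrite ler_pM2l //; lra.
Qed.

Lemma norm_shift (V : normedModType R) (z X : V) : `|z - (z + X)| = `|X|.
Proof. by rewrite opprD addrA subrr add0r normrN. Qed.

Lemma core (V : normedModType R) (k : nat) (A B : 'I_k -> V -> R) (S : V -> R)
  (W : set V) (z0 v w : V) :
  open W -> W z0 ->
  (forall z, W z -> differentiable S z /\
     (forall i, differentiable (A i) z /\ differentiable (B i) z) /\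
     (forall e, 'd S z e = \sum_(i < k) A i z * 'd (B i) z e)) ->
  (forall i e, {for z0, continuous (fun z => 'd (A i) z e)} /\
               {for z0, continuous (fun z => 'd (B i) z e)}) ->
  \sum_(i < k) ('d (A i) z0 v * 'd (B i) z0 w - 'd (A i) z0 w * 'd (B i) z0 v) = 0.
Proof.
move=> oW Wz0 HD HC.
pose Kd (c : R) (d : V) := \sum_(i < k) (`|'d (A i) z0 d| + `|'d (B i) z0 d| + c).
pose Ex (c : R) := \sum_(i < k) 2^-1 * (`|'d (A i) z0 v| + `|'d (B i) z0 w|
   + `|'d (A i) z0 w| + `|'d (B i) z0 v| + 2 * c).
pose M c := Kd c v + Kd c (w - v) + Kd c (- w) + Ex c.
have Kmono d c : 0 <= c -> c <= 1 -> Kd c d <= Kd 1 d.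
  by move=> c0 c1; apply: ler_sum => i _; rewrite lerD2l.
have Kpos d c : 0 <= c -> 0 <= Kd c d.
  by move=> c0; apply: sumr_ge0 => i _; rewrite !addr_ge0.
have Emono c : 0 <= c -> c <= 1 -> Ex c <= Ex 1.
  move=> c0 c1; apply: ler_sum => i _; rewrite ler_wpM2l ?invr_ge0 ?ler0n //.
  by rewrite lerD2l ler_wpM2l.
have Epos c : 0 <= c -> 0 <= Ex c.
  move=> c0; apply: sumr_ge0 => i _; rewrite mulr_ge0 ?invr_ge0 ?ler0n //.
  by rewrite !addr_ge0 // mulr_ge0.
apply: (@zero_of_small _ (M 1)).
  by rewrite /M !addr_ge0 // ?Kpos ?Epos.
move=> de de0 de1.
have de0' : 0 <= de by apply: ltW.
pose G (d : V) (z : V) := forall i, `|'d (A i) z d - 'd (A i) z0 d| <= de /\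
                                   `|'d (B i) z d - 'd (B i) z0 d| <= de.
have HG d : \forall z \near z0, G d z.
  apply: filter_forall => i.
  have [cA cB] := HC i d.
  have nA := cvgr_distC_le _ _ cA _ de0.
  have nB := cvgr_distC_le _ _ cB _ de0.
  by near=> z; split; [near: z; exact: nA | near: z; exact: nB].
have HWn : \forall z \near z0, W z by apply: open_nbhs_nbhs; split.
have : \forall z \near z0, W z /\ G v z /\ G (w - v) z /\ G (- w) z /\ G w z.
  near=> z; split; first by near: z.
  split; first by near: z; exact: HG.
  split; first by near: z; exact: HG.
  split; first by near: z; exact: HG.
  by near: z; exact: HG.
move=> /nbhs_ballP [r /= r0 Hr].
pose Nvw := `|v| + `|w| + 1.
have N0 : 0 < Nvw by rewrite /Nvw; have := normr_ge0 v; have := normr_ge0 w; lra.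
pose h := r / (4 * Nvw).
have h0 : 0 < h by rewrite divr_gt0 // mulr_gt0.
have h0' : 0 <= h by apply: ltW.
have hN : 2 * h * (`|v| + `|w|) < r.
  rewrite /h -mulrA (mulrC (r / _)) mulrA mulrA ltr_pdivrMr ?mulr_gt0 //.
  rewrite /Nvw; have := normr_ge0 v; have := normr_ge0 w; nra.
clearbody h.
have inB X : `|X| <= 2 * h * (`|v| + `|w|) ->
    W (z0 + X) /\ G v (z0 + X) /\ G (w - v) (z0 + X) /\ G (- w) (z0 + X) /\ G w (z0 + X).
  move=> HX; apply: Hr; rewrite -ball_normE /ball_ /= norm_shift.
  exact: le_lt_trans HX hN.
have nv : `|v| <= `|v| + `|w| by have := normr_ge0 w; lra.
have nw : `|w| <= `|v| + `|w| by have := normr_ge0 v; lra.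
have nvw0 : 0 <= `|v| + `|w| by rewrite addr_ge0.
have bt t (d : V) : 0 <= t <= h -> `|d| <= `|v| + `|w| -> `|t *: d| <= 2 * h * (`|v| + `|w|).
  move=> /andP[t0 th] nd; rewrite normrZ (ger0_norm t0).
  have : t * `|d| <= h * (`|v| + `|w|) by apply: ler_pM.
  nra.
have P1 t : 0 <= t <= h -> z0 + t *: v = z0 + t *: v by [].
have pt2 t : 0 <= t <= h -> z0 + h *: v + t *: (w - v) = z0 + (h *: v + t *: (w - v)).
  by rewrite addrA.
have pt3 t : 0 <= t <= h -> z0 + h *: w + t *: (- w) = z0 + (h - t) *: w.
  by rewrite scalerN scalerBl addrA.
have b2 t : 0 <= t <= h -> `|h *: v + t *: (w - v)| <= 2 * h * (`|v| + `|w|).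
  move=> /andP[t0 th].
  have := ler_normD (h *: v) (t *: (w - v)).
  rewrite !normrZ (ger0_norm t0) (ger0_norm h0').
  have := ler_normB w v.
  move=> nwv.
  have : t * `|w - v| <= h * (`|w| + `|v|) by apply: ler_pM.
  have : h * `|v| <= h * (`|v| + `|w|) by apply: ler_wpM2l.
  nra.
have b3 t : 0 <= t <= h -> `|(h - t) *: w| <= 2 * h * (`|v| + `|w|).
  move=> /andP[t0 th]; apply: bt => //; apply/andP; split; lra.
have HDz X : `|X| <= 2 * h * (`|v| + `|w|) ->
  differentiable S (z0 + X) /\
  (forall i, differentiable (A i) (z0 + X) /\ differentiable (B i) (z0 + X)) /\
  (forall e, 'd S (z0 + X) e = \sum_(i < k) A i (z0 + X) * 'd (B i) (z0 + X) e).
  by move=> /inB [WX _]; apply: HD.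
have E1 := @edge V k A B S z0 (z0 + h *: v) v h de (fun i => 'd (A i) z0 v)
   (fun i => 'd (B i) z0 v) h0' de0' erefl.
have {E1} E1 : `|S (z0 + h *: v) - S z0 - \sum_(i < k) 2^-1 * (A i z0 + A i (z0 + h *: v)) *
     (B i (z0 + h *: v) - B i z0)| <= Kd de v * de * h ^+ 2.
  apply: E1.
    move=> t th; have [? [? H3]] := HDz _ (bt t v th nv); by split => //; split.
  by move=> i t th; have [_ [Gv _]] := inB _ (bt t v th nv); apply: Gv.
have E2 := @edge V k A B S (z0 + h *: v) (z0 + h *: w) (w - v) h de
   (fun i => 'd (A i) z0 (w - v)) (fun i => 'd (B i) z0 (w - v)) h0' de0'.
have {E2} E2 : `|S (z0 + h *: w) - S (z0 + h *: v) - \sum_(i < k) 2^-1 *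
     (A i (z0 + h *: v) + A i (z0 + h *: w)) * (B i (z0 + h *: w) - B i (z0 + h *: v))|
     <= Kd de (w - v) * de * h ^+ 2.
  apply: E2.
  - by rewrite scalerBr -addrA [h *: v + _]addrC subrK.
  - move=> t th; rewrite pt2 //; have [? [? H3]] := HDz _ (b2 t th); by split => //; split.
  - by move=> i t th; rewrite pt2 //; have [_ [_ [Gv _]]] := inB _ (b2 t th); apply: Gv.
have E3 := @edge V k A B S (z0 + h *: w) z0 (- w) h de
   (fun i => 'd (A i) z0 (- w)) (fun i => 'd (B i) z0 (- w)) h0' de0'.
have {E3} E3 : `|S z0 - S (z0 + h *: w) - \sum_(i < k) 2^-1 *
     (A i (z0 + h *: w) + A i z0) * (B i z0 - B i (z0 + h *: w))|
     <= Kd de (- w) * de * h ^+ 2.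
  apply: E3.
  - by rewrite scalerN addrK.
  - move=> t th; rewrite pt3 //; have [? [? H3]] := HDz _ (b3 t th); by split => //; split.
  - by move=> i t th; rewrite pt3 //; have [_ [_ [_ [Gv _]]]] := inB _ (b3 t th); apply: Gv.
have hh : 0 <= h <= h by rewrite h0' lexx.
have exA (d : V) i : `|d| <= `|v| + `|w| -> G d =1 G d ->
   (forall t, 0 <= t <= h -> G d (z0 + t *: d)) ->
   `|A i (z0 + h *: d) - A i z0 - 'd (A i) z0 d * h| <= de * h /\
   `|B i (z0 + h *: d) - B i z0 - 'd (B i) z0 d * h| <= de * h.
  move=> nd _ Gd; split; apply: (@step1 V _ z0 d h) => //.
  - by move=> s sh; have [WX _] := inB _ (bt s d sh nd); have [_ [/(_ i) [] ]] := HD _ WX.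
  - by move=> s sh; have [] := Gd s sh i.
  - by move=> s sh; have [WX _] := inB _ (bt s d sh nd); have [_ [/(_ i) [] ]] := HD _ WX.
  - by move=> s sh; have [] := Gd s sh i.
have Gv t : 0 <= t <= h -> G v (z0 + t *: v).
  by move=> th; have [_ [Gv _]] := inB _ (bt t v th nv).
have Gw t : 0 <= t <= h -> G w (z0 + t *: w).
  by move=> th; have [_ [_ [_ [_ Gw']]]] := inB _ (bt t w th nw).
have XV i := exA v i nv (frefl _) Gv.
have XW i := exA w i nw (frefl _) Gw.
pose T := \sum_(i < k) 2^-1 * ((A i (z0 + h *: v) - A i z0) * (B i (z0 + h *: w) - B i z0)
   - (A i (z0 + h *: w) - A i z0) * (B i (z0 + h *: v) - B i z0)).
have HT : `|T| <= (Kd de v + Kd de (w - v) + Kd de (- w)) * de * h ^+ 2.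
  have HS : T = (\sum_(i < k) 2^-1 * (A i z0 + A i (z0 + h *: v)) * (B i (z0 + h *: v) - B i z0)
     + \sum_(i < k) 2^-1 * (A i (z0 + h *: v) + A i (z0 + h *: w)) * (B i (z0 + h *: w) - B i (z0 + h *: v))
     + \sum_(i < k) 2^-1 * (A i (z0 + h *: w) + A i z0) * (B i z0 - B i (z0 + h *: w))).
    by rewrite /T -!big_split /=; apply: eq_bigr => i _; field.
  set e1 := S _ - _ - _ in E1; set e2 := S _ - _ - _ in E2; set e3 := S _ - _ - _ in E3.
  have -> : T = - (e1 + e2 + e3) by rewrite HS /e1 /e2 /e3; ring.
  rewrite normrN.
  have := ler_normD (e1 + e2) e3; have := ler_normD e1 e2.
  have -> : (Kd de v + Kd de (w - v) + Kd de (- w)) * de * h ^+ 2 =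
    Kd de v * de * h ^+ 2 + Kd de (w - v) * de * h ^+ 2 + Kd de (- w) * de * h ^+ 2 by ring.
  lra.
set C := \sum_(i < k) _.
have HC2 : `|h ^+ 2 / 2 * C - T| <= de * h ^+ 2 * Ex de.
  rewrite /C /T mulr_sumr -sumrB /Ex mulr_sumr.
  apply: le_trans (ler_norm_sum _ _ _) _.
  apply: ler_sum => i _.
  have [xa xb] := XV i; have [ya yb] := XW i.
  have := alg2 h0' de0' xa yb ya xb.
  set L := (_ - _) - _.
  have -> : h ^+ 2 / 2 * ('d (A i) z0 v * 'd (B i) z0 w - 'd (A i) z0 w * 'd (B i) z0 v) -
      2^-1 * ((A i (z0 + h *: v) - A i z0) * (B i (z0 + h *: w) - B i z0)
   - (A i (z0 + h *: w) - A i z0) * (B i (z0 + h *: v) - B i z0)) = - (2^-1 * L).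
    by rewrite /L; field.
  rewrite normrN normrM ger0_norm ?invr_ge0 ?ler0n // => HL.
  have -> : de * h ^+ 2 * (2^-1 * (`|'d (A i) z0 v| + `|'d (B i) z0 w| + `|'d (A i) z0 w| +
       `|'d (B i) z0 v| + 2 * de)) = 2^-1 * (de * h ^+ 2 * (`|'d (A i) z0 v| + `|'d (B i) z0 w|
       + `|'d (A i) z0 w| + `|'d (B i) z0 v| + 2 * de)) by ring.
  by rewrite ler_wpM2l // invr_ge0 ler0n.
have hC : h ^+ 2 / 2 * `|C| <= de * h ^+ 2 * M de.
  have := ler_normD (h ^+ 2 / 2 * C - T) T.
  rewrite subrK normrM ger0_norm ?divr_ge0 ?exprn_ge0 ?ler0n //.
  rewrite /M.
  have -> : de * h ^+ 2 * (Kd de v + Kd de (w - v) + Kd de (- w) + Ex de) =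
     (Kd de v + Kd de (w - v) + Kd de (- w)) * de * h ^+ 2 + de * h ^+ 2 * Ex de by ring.
  lra.
have hM : M de <= M 1.
  rewrite /M; have := Kmono v de de0' de1; have := Kmono (w - v) de de0' de1;
  have := Kmono (- w) de de0' de1; have := Emono de de0' de1; lra.
have h2 : 0 < h ^+ 2 by rewrite exprn_gt0.
have : `|C| <= 2 * de * M de.
  have := hC; rewrite -ler_pdivlMl ?divr_gt0 ?ltr0n //.
  have -> : (h ^+ 2 / 2)^-1 * (de * h ^+ 2 * M de) = 2 * de * M de.
    by field; rewrite gt_eqF.
  by [].
move=> H1; apply: le_trans H1 _.
by rewrite ler_wpM2l // mulr_ge0.
Unshelve. all: by end_near.
Qed.

End OneD.

Section Aux.
Context {R : realType}.

Lemma diff_lin_comp (U V W : normedModType R) (L : V -> W) (f : U -> V) z :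
  linear L -> continuous L -> differentiable f z ->
  differentiable (L \o f) z /\ 'd (L \o f) z = L \o 'd f z :> (U -> W).
Proof.
move=> Llin Lc df.
pose LM := GRing.isLinear.Build _ _ _ _ L Llin.
pose LL : {linear V -> W} := HB.pack L LM.
have dL x : differentiable (LL : V -> W) x by apply: linear_differentiable.
split; first exact: (differentiable_comp df (dL (f z))).
rewrite (diff_comp df (dL (f z))).
by rewrite (@diff_lin _ _ _ LL).
Qed.
Arguments diff_lin_comp {U V W L f z}.

Lemma cont_sum (T : topologicalType) k (f : 'I_k -> T -> R) x :
  (forall i, {for x, continuous (f i)}) ->
  {for x, continuous (fun y => \sum_(i < k) f i y)}.
Proof.
move=> H.
have -> : (fun y => \sum_(i < k) f i y) = \sum_(i < k) f i.
  by apply/funext => y; rewrite fct_sumE.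
elim/big_ind: _ => //.
- exact: cvg_cst.
- by move=> g1 g2 c1 c2; apply: continuousD.
Qed.

Lemma cont_coord n (i : 'I_n) : continuous (fun M : 'rV[R]_n => M 0 i).
Proof. exact: coord_continuous. Qed.

Lemma cont_fst (V W : normedModType R) : continuous (fun p : V * W => p.1).
Proof. by move=> p; apply: cvg_fst. Qed.

Lemma cont_snd (V W : normedModType R) : continuous (fun p : V * W => p.2).
Proof. by move=> p; apply: cvg_snd. Qed.

Lemma dotrv_cont n (a : 'rV[R]_n) : continuous (fun p : 'rV[R]_n => dotrv p a).
Proof.
move=> p; rewrite /dotrv; apply: cont_sum => i.
have -> : (fun y : 'rV[R]_n => y 0 i * a 0 i) = (fun y => y 0 i) \* (fun _ => a 0 i) by [].
have c1 : {for p, continuous (fun y : 'rV[R]_n => y 0 i)} by apply: cont_coord.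
have c2 : {for p, continuous (fun _ : 'rV[R]_n => a 0 i)} by apply: cst_continuous.
have := continuousM c1 c2.
exact.
Qed.

Lemma dotrv_lin n (a : 'rV[R]_n) : linear (fun p : 'rV[R]_n => dotrv p a).
Proof.
move=> c x y; rewrite /dotrv scaler_sumr -big_split /=; apply: eq_bigr => i _.
by rewrite !mxE mulrDl -mulrA.
Qed.

Lemma dotrv_grad n (h : 'rV[R]_n -> R) a d :
  dotrv (gradrv h a) d = 'd h a d.
Proof.
rewrite /dotrv /gradrv {2}(row_sum_delta d) linear_sum; apply: eq_bigr => i _.
by rewrite mxE linearZ /= mulrC.
Qed.

Lemma dotrv_delta n (a : 'rV[R]_n) i : dotrv (delta_mx 0 i) a = a 0 i.
Proof.
rewrite /dotrv (bigD1 i) //= big1 ?addr0.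
  by rewrite mxE !eqxx mul1r.
by move=> j /negPf ji; rewrite mxE ji andbF mul0r.
Qed.

Lemma lin_diff (V W : normedModType R) (L : V -> W) x :
  linear L -> continuous L -> differentiable L x /\ 'd L x = L :> (V -> W).
Proof.
move=> Llin Lc.
pose LM := GRing.isLinear.Build _ _ _ _ L Llin.
pose LL : {linear V -> W} := HB.pack L LM.
split; first exact: (@linear_differentiable _ _ _ LL).
exact: (@diff_lin _ _ _ LL).
Qed.
Arguments lin_diff {V W L} x.

Lemma affine_diff (V W : normedModType R) (c : W) (L : V -> W) x :
  linear L -> continuous L ->
  differentiable (fun p => c + L p) x /\ 'd (fun p => c + L p) x = L :> (V -> W).
Proof.
move=> Llin Lc; have [dL eL] := lin_diff x Llin Lc.
have dc : differentiable (cst c : V -> W) x by exact: differentiable_cst.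
have -> : (fun p => c + L p) = cst c + L by [].
split; first exact: differentiableD.
by rewrite diffD // eL diff_cst; apply/funext => p /=; rewrite add0r.
Qed.
Arguments affine_diff {V W} c {L} x.

Lemma grad_affine n (c : R) (a q : 'rV[R]_n) :
  gradrv (fun p => c + dotrv p a) q = a.
Proof.
have [_ e] := affine_diff c q (@dotrv_lin n a) (@dotrv_cont n a).
by apply/rowP => i; rewrite /gradrv mxE e dotrv_delta.
Qed.

Lemma dcomp_lin (U V W : normedModType R) (L : V -> W) (f : U -> V) z :
  linear L -> continuous L -> differentiable f z ->
  differentiable (fun y => L (f y)) z /\ forall e, 'd (fun y => L (f y)) z e = L ('d f z e).
Proof.
move=> Ll Lc df; have [d1 d2] := diff_lin_comp Ll Lc df.
by split => // e; rewrite [LHS](congr1 (fun g => g e) d2).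
Qed.
Arguments dcomp_lin {U V W L f z}.

Lemma id_diff (V : normedModType R) (x : V) :
  differentiable (fun y : V => y) x /\ 'd (fun y : V => y) x = (fun y => y) :> (V -> V).
Proof. by apply: (@lin_diff V V (fun y => y) x) => // p; exact: cvg_id. Qed.
Arguments id_diff {V}.

Lemma comp_diff (U V W : normedModType R) (f : U -> V) (g : V -> W) z :
  differentiable f z -> differentiable g (f z) ->
  differentiable (fun y => g (f y)) z /\ forall e, 'd (fun y => g (f y)) z e = 'd g (f z) ('d f z e).
Proof.
move=> df dg; split; first exact: (differentiable_comp df dg).
by move=> e; rewrite [LHS](congr1 (fun h => h e) (diff_comp df dg)).
Qed.
Arguments comp_diff {U V W f g z}.

Lemma pair_diff (U V W : normedModType R) (f : U -> V) (g : U -> W) z :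
  differentiable f z -> differentiable g z ->
  differentiable (fun y => (f y, g y)) z /\ forall e, 'd (fun y => (f y, g y)) z e = ('d f z e, 'd g z e).
Proof.
move=> df dg; split; first exact: differentiable_pair.
by move=> e; rewrite [LHS](congr1 (fun h => h e) (diff_pair df dg)).
Qed.
Arguments pair_diff {U V W f g z}.

Lemma part1 n m (V : normedModType R) (phi : 'rV[R]_n * 'rV[R]_m -> V) x0 u0 :
  differentiable phi (x0, u0) ->
  differentiable (fun x => phi (x, u0)) x0 /\
  forall d, 'd (fun x => phi (x, u0)) x0 d = 'd phi (x0, u0) (d, 0).
Proof.
move=> dphi.
have [di ei] := id_diff x0.
have dc : differentiable (fun _ : 'rV[R]_n => u0) x0 by exact: differentiable_cst.
have [dp ep] := pair_diff di dc.
have [dd ed] := comp_diff dp dphi.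
split => // d; rewrite ed ep ei.
by rewrite (_ : 'd (fun _ : 'rV[R]_n => u0) x0 d = 0) // (diff_cst u0 x0).
Qed.
Arguments part1 {n m V phi x0 u0}.

Lemma part2 n m (V : normedModType R) (phi : 'rV[R]_n * 'rV[R]_m -> V) x0 u0 :
  differentiable phi (x0, u0) ->
  differentiable (fun u => phi (x0, u)) u0 /\
  forall d, 'd (fun u => phi (x0, u)) u0 d = 'd phi (x0, u0) (0, d).
Proof.
move=> dphi.
have [di ei] := id_diff u0.
have dc : differentiable (fun _ : 'rV[R]_m => x0) u0 by exact: differentiable_cst.
have [dp ep] := pair_diff dc di.
have [dd ed] := comp_diff dp dphi.
split => // d; rewrite ed ep ei.
by rewrite (_ : 'd (fun _ : 'rV[R]_m => x0) u0 d = 0) // (diff_cst x0 u0).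
Qed.
Arguments part2 {n m V phi x0 u0}.

Lemma dotrv_linr n (a : 'rV[R]_n) : linear (fun p : 'rV[R]_n => dotrv a p).
Proof.
move=> c x y; rewrite /dotrv scaler_sumr -big_split /=; apply: eq_bigr => i _.
rewrite !mxE mulrDr; congr (_ + _); rewrite mulrCA //.
Qed.

Lemma dotrv_contr n (a : 'rV[R]_n) : continuous (fun p : 'rV[R]_n => dotrv a p).
Proof.
have -> : (fun p : 'rV[R]_n => dotrv a p) = (fun p => dotrv p a).
  by apply/funext => p; rewrite /dotrv; apply: eq_bigr => i _; rewrite mulrC.
exact: dotrv_cont.
Qed.

Lemma dotrvDr n (a b c : 'rV[R]_n) : dotrv a (b + c) = dotrv a b + dotrv a c.
Proof. by rewrite /dotrv -big_split; apply: eq_bigr => i _; rewrite mxE mulrDr. Qed.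
Lemma dotrvDl n (a b c : 'rV[R]_n) : dotrv (b + c) a = dotrv b a + dotrv c a.
Proof. by rewrite /dotrv -big_split; apply: eq_bigr => i _; rewrite mxE mulrDl. Qed.
Lemma dotrvZr n (k : R) (a b : 'rV[R]_n) : dotrv a (k *: b) = k * dotrv a b.
Proof. by rewrite /dotrv mulr_sumr; apply: eq_bigr => i _; rewrite mxE mulrCA. Qed.
Lemma dotrvZl n (k : R) (a b : 'rV[R]_n) : dotrv (k *: a) b = k * dotrv a b.
Proof. by rewrite /dotrv mulr_sumr; apply: eq_bigr => i _; rewrite mxE mulrA. Qed.
Lemma dotrvNl n (a b : 'rV[R]_n) : dotrv (- a) b = - dotrv a b.
Proof. by rewrite /dotrv -sumrN; apply: eq_bigr => i _; rewrite mxE mulNr. Qed.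
Lemma dotrv0l n (b : 'rV[R]_n) : dotrv 0 b = 0.
Proof. by rewrite /dotrv big1 // => i _; rewrite mxE mul0r. Qed.

Lemma dot_mid n (P1 P0 X1 X0 : 'rV[R]_n) :
  dotrv P1 X1 - dotrv P0 X0 =
  dotrv (2%:R^-1 *: (P1 + P0)) (X1 - X0) + dotrv (P1 - P0) (2%:R^-1 *: (X1 + X0)).
Proof.
rewrite /dotrv -sumrB -big_split; apply: eq_bigr => i _.
by rewrite !mxE /=; field.
Qed.

Lemma add_diff (U V : normedModType R) (f g : U -> V) z :
  differentiable f z -> differentiable g z ->
  differentiable (fun y => f y + g y) z /\
  forall e, 'd (fun y => f y + g y) z e = 'd f z e + 'd g z e.
Proof.
move=> df dg; split; first exact: (differentiableD df dg).
by move=> e; rewrite [LHS](congr1 (fun h => h e) (diffD df dg)).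
Qed.
Arguments add_diff {U V f g z}.

Lemma sub_diff (U V : normedModType R) (f g : U -> V) z :
  differentiable f z -> differentiable g z ->
  differentiable (fun y => f y - g y) z /\
  forall e, 'd (fun y => f y - g y) z e = 'd f z e - 'd g z e.
Proof.
move=> df dg; split; first exact: (differentiableB df dg).
by move=> e; rewrite [LHS](congr1 (fun h => h e) (diffB df dg)).
Qed.
Arguments sub_diff {U V f g z}.

Lemma scale_diff (U V : normedModType R) (k : R) (f : U -> V) z :
  differentiable f z ->
  differentiable (fun y => k *: f y) z /\
  forall e, 'd (fun y => k *: f y) z e = k *: 'd f z e.
Proof.
move=> df; split; first exact: (differentiableZ k df).
by move=> e; rewrite [LHS](congr1 (fun h => h e) (diffZ k df)).
Qed.
Arguments scale_diff {U V} k {f z}.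

Lemma cont_near (T U : topologicalType) (f g : T -> U) x :
  (\forall y \near x, g y = f y) -> f x = g x ->
  {for x, continuous g} -> {for x, continuous f}.
Proof.
move=> H e c; rewrite /prop_for /continuous_at e.
apply: cvg_trans c; exact: near_eq_cvg.
Qed.

Lemma final_alg n (tau G1 G3 : R) (P1 P0 dX1 dX0 D1 D3 gx : 'rV[R]_n) :
  tau != 0 ->
  dX1 - dX0 = tau *: (D1 + D3) ->
  tau^-1 *: (P1 - P0) = - gx ->
  dotrv gx (2%:R^-1 *: (dX1 + dX0)) = G1 + dotrv (2%:R^-1 *: (P1 + P0)) D1 ->
  G3 + dotrv (2%:R^-1 *: (P1 + P0)) D3 = 0 ->
  dotrv P1 dX1 - dotrv P0 dX0 = - tau * (G1 + G3).
Proof.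
move=> t0 F1 F2 Hg F3.
rewrite dot_mid F1.
have -> : P1 - P0 = tau *: (- gx) by rewrite -F2 scalerA mulfV // scale1r.
rewrite dotrvZr [dotrv (tau *: _) _]dotrvZl dotrvNl Hg dotrvDr.
have -> : G3 = - dotrv (2%:R^-1 *: (P1 + P0)) D3 by rewrite -[G3](addrK (dotrv (2%:R^-1 *: (P1 + P0)) D3)) F3 sub0r.
ring.
Qed.

Lemma lin_pair (U V W : normedModType R) (L : {linear (U * V)%type -> W}) a b :
  L (a, b) = L (a, 0) + L (0, b).
Proof. rewrite -linearD; congr (L _); apply: injective_projections => /=; [exact: (esym (addr0 _)) | exact: (esym (add0r _))]. Qed.

End Aux.

Arguments diff_lin_comp {R U V W L f z}.
Arguments lin_diff {R V W L} x.
Arguments affine_diff {R V W} c {L} x.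
Arguments dcomp_lin {R U V W L f z}.
Arguments id_diff {R V}.
Arguments comp_diff {R U V W f g z}.
Arguments pair_diff {R U V W f g z}.
Arguments part1 {R n m V phi x0 u0}.
Arguments part2 {R n m V phi x0 u0}.
Arguments add_diff {R U V f g z}.
Arguments sub_diff {R U V f g z}.
Arguments scale_diff {R U V} k {f z}.

Arguments lin_pair {R U V W}.
Arguments final_alg {R n tau G1 G3 P1 P0 dX1 dX0 D1 D3 gx}.

Theorem mainTheorem9 (R : realType) (n m : nat)
  (fd : 'rV[R]_n * 'rV[R]_m -> 'rV[R]_n) (gd : 'rV[R]_n * 'rV[R]_m -> R)
  (tau : R) (W : set ('rV[R]_n * 'rV[R]_n))
  (F : 'rV[R]_n * 'rV[R]_n -> 'rV[R]_n * 'rV[R]_n)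
  (w : 'rV[R]_n * 'rV[R]_n -> 'rV[R]_m) :
  C1 fd -> C1 gd -> 0 < tau -> open W -> C1_on W F -> C1_on W w ->
  (forall z, W z ->
     let xk := z.1 in let pk := z.2 in
     let xk1 := (F z).1 in let pk1 := (F z).2 in
     let xd := 2%:R^-1 *: (xk1 + xk) in
     let pd := 2%:R^-1 *: (pk1 + pk) in
     let ud := w z in
     [/\ tau^-1 *: (xk1 - xk) = gradrv (fun p => Hd fd gd xd p ud) pd,
         tau^-1 *: (pk1 - pk) = - gradrv (fun x => Hd fd gd x pd ud) xd
       & 0 = gradrv (fun u => Hd fd gd xd pd u) ud]) ->
  symplectic_on W F.
Proof.
move=> [dfd cfd] [dgd cgd] tau0 oW [dF cF] [dw cw] Heq z0 Wz0 v1 v2.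
have taun0 : tau != 0 by rewrite gt_eqF.
pose sx (z : 'rV[R]_n * 'rV[R]_n) := 2%:R^-1 *: ((F z).1 + z.1).
pose A (j : 'I_(n + n)) (z : 'rV[R]_n * 'rV[R]_n) : R :=
  match fintype.split j with inl i => (F z).2 0 i | inr i => - z.2 0 i end.
pose B (j : 'I_(n + n)) (z : 'rV[R]_n * 'rV[R]_n) : R :=
  match fintype.split j with inl i => (F z).1 0 i | inr i => z.1 0 i end.
pose S z := - tau * gd (sx z, w z).
have LP1 i : linear (fun p : 'rV[R]_n * 'rV[R]_n => p.1 0 i) /\
             continuous (fun p : 'rV[R]_n * 'rV[R]_n => p.1 0 i).
  split; first by move=> c x y; rewrite /= !mxE.
  have -> : (fun p : 'rV[R]_n * 'rV[R]_n => p.1 0 i) = (fun M : 'rV[R]_n => M 0 i) \o fst by [].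
  move=> p; apply: continuous_comp; [exact: cont_fst | exact: cont_coord].
have LP2 i : linear (fun p : 'rV[R]_n * 'rV[R]_n => p.2 0 i) /\
             continuous (fun p : 'rV[R]_n * 'rV[R]_n => p.2 0 i).
  split; first by move=> c x y; rewrite /= !mxE.
  have -> : (fun p : 'rV[R]_n * 'rV[R]_n => p.2 0 i) = (fun M : 'rV[R]_n => M 0 i) \o snd by [].
  move=> p; apply: continuous_comp; [exact: cont_snd | exact: cont_coord].
have LN2 i : linear (fun p : 'rV[R]_n * 'rV[R]_n => - p.2 0 i) /\
             continuous (fun p : 'rV[R]_n * 'rV[R]_n => - p.2 0 i).
  split; first by move=> c x y; rewrite /= !mxE opprD -mulrN.
  move=> p; apply: continuousN; exact: (proj2 (LP2 i)).

have Wn z : W z -> \forall y \near z, W y.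
  by move=> Wz; apply: open_nbhs_nbhs; split.
have dF1 z i : W z -> differentiable (fun y => (F y).1 0 i) z /\
    forall e, 'd (fun y => (F y).1 0 i) z e = ('d F z e).1 0 i.
  move=> Wz; have [l c] := LP1 i; have [h1 h2] := dcomp_lin l c (dF z Wz).
  split; first exact h1.
  exact h2.
have dF2 z i : W z -> differentiable (fun y => (F y).2 0 i) z /\
    forall e, 'd (fun y => (F y).2 0 i) z e = ('d F z e).2 0 i.
  move=> Wz; have [l c] := LP2 i; exact: (dcomp_lin l c (dF z Wz)).
have dZ1 z i : differentiable (fun y : 'rV[R]_n * 'rV[R]_n => y.1 0 i) z /\
    forall e, 'd (fun y : 'rV[R]_n * 'rV[R]_n => y.1 0 i) z e = e.1 0 i.
  have [l c] := LP1 i; have [d1 d2] := lin_diff z l c.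
  by split => // e; rewrite d2.
have dZ2 z i : differentiable (fun y : 'rV[R]_n * 'rV[R]_n => - y.2 0 i) z /\
    forall e, 'd (fun y : 'rV[R]_n * 'rV[R]_n => - y.2 0 i) z e = - e.2 0 i.
  have [l c] := LN2 i; have [d1 d2] := lin_diff z l c.
  by split => // e; rewrite d2.
have dsx z : W z -> differentiable sx z /\
    forall e, 'd sx z e = 2%:R^-1 *: (('d F z e).1 + e.1).
  move=> Wz.
  have lfst : linear (fun p : 'rV[R]_n * 'rV[R]_n => p.1) by move=> c x y.
  have cfst : continuous (fun p : 'rV[R]_n * 'rV[R]_n => p.1) by apply: cont_fst.
  have [a1 b1] := dcomp_lin lfst cfst (dF z Wz).
  have [a2 b2] := lin_diff z lfst cfst.
  have [a3 b3] := add_diff a1 a2.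
  have [a4 b4] := scale_diff 2%:R^-1 a3.
  cbv beta in b1; cbv beta in b2; cbv beta in b3; cbv beta in b4.
  refine (conj _ _); first by rewrite /sx; exact a4.
  move=> e; rewrite /sx b4 b3.
  congr (_ *: (_ + _)); [exact (b1 e) | exact (congr1 (fun f => f e) b2)].
have dX1 z : W z -> differentiable (fun y => (F y).1) z /\
    forall e, 'd (fun y => (F y).1) z e = ('d F z e).1.
  move=> Wz.
  have lfst : linear (fun p : 'rV[R]_n * 'rV[R]_n => p.1) by move=> c x y.
  have cfst : continuous (fun p : 'rV[R]_n * 'rV[R]_n => p.1) by apply: cont_fst.
  exact (dcomp_lin lfst cfst (dF z Wz)).
have dX0 z : differentiable (fun y : 'rV[R]_n * 'rV[R]_n => y.1) z /\
    forall e, 'd (fun y : 'rV[R]_n * 'rV[R]_n => y.1) z e = e.1.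
  have lfst : linear (fun p : 'rV[R]_n * 'rV[R]_n => p.1) by move=> c x y.
  have cfst : continuous (fun p : 'rV[R]_n * 'rV[R]_n => p.1) by apply: cont_fst.
  have [a2 b2] := lin_diff z lfst cfst.
  refine (conj a2 _) => e; exact (congr1 (fun f => f e) b2).
have eq1 y : W y -> (F y).1 - y.1 = tau *: fd (sx y, w y).
  move=> Wy; have := Heq y Wy; cbv zeta; case=> E1 _ _.
  rewrite /Hd grad_affine in E1.
  by rewrite /sx -E1 scalerA mulfV // scale1r.
have sl (i : 'I_n) : fintype.split (lshift n i) = inl i := @unsplitK n n (inl i).
have sr (i : 'I_n) : fintype.split (rshift n i) = inr i := @unsplitK n n (inr i).
Time have HD z : W z -> differentiable S z /\
     (forall j, differentiable (A j) z /\ differentiable (B j) z) /\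
     (forall e, 'd S z e = \sum_(j < n + n) A j z * 'd (B j) z e).
  move=> Wz.
  have [ds1 ds2] := dsx z Wz.
  have [dp1 dp2] := pair_diff ds1 (dw z Wz).
  have [dG1 dG2] := comp_diff dp1 (dgd (sx z, w z)).
  have lmul : linear (fun t : R => - tau * t).
    by move=> c x y; rewrite mulrDr mulrCA.
  have cmul : continuous (fun t : R => - tau * t) by apply: mulrl_continuous.
  have [dS1 dS2] := dcomp_lin lmul cmul dG1.
  cbv beta in dp2; cbv beta in dG2; cbv beta in dS2.
  refine (conj _ (conj _ _)).
  - by rewrite /S; exact dS1.
  - move=> j; rewrite /A /B; case: (fintype.split j) => i.
      exact (conj (proj1 (dF2 z i Wz)) (proj1 (dF1 z i Wz))).
    exact (conj (proj1 (dZ2 z i)) (proj1 (dZ1 z i))).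
  move=> e.
  set ds := 2%:R^-1 *: (('d F z e).1 + e.1).
  set du := 'd w z e.
  set pz := (sx z, w z).
  have HS : 'd S z e = - tau * 'd gd pz (ds, du).
    rewrite /S; etransitivity; first exact (dS2 e).
    congr (_ * _); etransitivity; first exact (dG2 e).
    congr ('d gd _ _); etransitivity; first exact (dp2 e).
    congr (_, _); exact (ds2 e).
  have HS2 : 'd S z e = - tau * ('d gd pz (ds, 0) + 'd gd pz (0, du)).
    exact (etrans HS (congr1 (fun x => - tau * x) (lin_pair _ _ _))).
  have HSum : \sum_(j < n + n) A j z * 'd (B j) z e =
      dotrv (F z).2 ('d F z e).1 - dotrv z.2 e.1.
    rewrite big_split_ord /dotrv -sumrN.
    congr (_ + _); apply: eq_bigr => i _; rewrite /A /B ?sl ?sr.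
      congr (_ * _); exact ((dF1 z i Wz).2 e).
    rewrite -mulNr; congr (_ * _); exact ((dZ1 z i).2 e).
  have [f1 f2] := sub_diff (proj1 (dX1 z Wz)) (proj1 (dX0 z)).
  have [g1 g2] := comp_diff dp1 (dfd (sx z, w z)).
  have [g3 g4] := scale_diff tau g1.
  cbv beta in f2; cbv beta in g2; cbv beta in g4.
  have NEAR : \forall y \near z, (F y).1 - y.1 = tau *: fd (sx y, w y).
    exact: (filterS eq1 (Wn z Wz)).
  have ND := near_eq_derive e NEAR.
  have F1 : ('d F z e).1 - e.1 = tau *: 'd fd pz (ds, du).
    etransitivity; first (symmetry; etransitivity; first exact (f2 e)).
      congr (_ - _); [exact ((dX1 z Wz).2 e) | exact ((dX0 z).2 e)].
    etransitivity; first exact (esym (deriveE e f1)).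
    etransitivity; first exact ND.
    etransitivity; first exact (deriveE e g3).
    etransitivity; first exact (g4 e).
    congr (_ *: _); etransitivity; first exact (g2 e).
    congr ('d fd _ _); etransitivity; first exact (dp2 e).
    congr (_, _); exact (ds2 e).
  have F1' : ('d F z e).1 - e.1 = tau *: ('d fd pz (ds, 0) + 'd fd pz (0, du)).
    exact (etrans F1 (congr1 (fun x => tau *: x) (lin_pair _ _ _))).
  have := Heq z Wz; cbv zeta; case=> _ E2 E3.
  set q := 2%:R^-1 *: ((F z).2 + z.2) in E2 E3 *.
  have [p1 p2] := part1 (dgd (sx z, w z)).
  have [p3 p4] := part1 (dfd (sx z, w z)).
  have [p5 p6] := dcomp_lin (@dotrv_linr R n q) (@dotrv_contr R n q) p3.
  have [p7 p8] := add_diff p1 p5.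
  cbv beta in p6; cbv beta in p8.
  have Hg : dotrv (gradrv (fun x => Hd fd gd x q (w z)) (2%:R^-1 *: ((F z).1 + z.1))) ds
      = 'd gd pz (ds, 0) + dotrv q ('d fd pz (ds, 0)).
    etransitivity; first exact (dotrv_grad _ _ _ _).
    etransitivity; first exact (p8 ds).
    congr (_ + _); first exact (p2 ds).
    etransitivity; first exact (p6 ds).
    congr (dotrv _ _); exact (p4 ds).
  have [q1 q2] := part2 (dgd (sx z, w z)).
  have [q3 q4] := part2 (dfd (sx z, w z)).
  have [q5 q6] := dcomp_lin (@dotrv_linr R n q) (@dotrv_contr R n q) q3.
  have [q7 q8] := add_diff q1 q5.
  cbv beta in q6; cbv beta in q8.
  have Z : dotrv (gradrv (fun u => Hd fd gd (sx z) q u) (w z)) du = 0.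
    have -> : gradrv (fun u => Hd fd gd (sx z) q u) (w z) = 0 by exact (esym E3).
    exact: dotrv0l.
  have F3 : 'd gd pz (0, du) + dotrv q ('d fd pz (0, du)) = 0.
    etransitivity; last exact Z.
    etransitivity; last exact (esym (dotrv_grad _ _ _ _)).
    symmetry; etransitivity; first exact (q8 du).
    congr (_ + _); first exact (q2 du).
    etransitivity; first exact (q6 du).
    congr (dotrv _ _); exact (q4 du).
  exact (etrans HS2 (esym (etrans HSum (final_alg taun0 F1' E2 Hg F3)))).
have HC j e : {for z0, continuous (fun z => 'd (A j) z e)} /\
              {for z0, continuous (fun z => 'd (B j) z e)}.
  rewrite /A /B; case: (fintype.split j) => i.
    split.
      apply: (@cont_near _ _ _ (fun z => ('d F z e).2 0 i) z0).
      - exact: (filterS (fun y Wy => esym ((dF2 y i Wy).2 e)) (Wn z0 Wz0)).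
      - exact ((dF2 z0 i Wz0).2 e).
      - exact (continuous_comp (cF e z0 Wz0) ((LP2 i).2 _)).
    apply: (@cont_near _ _ _ (fun z => ('d F z e).1 0 i) z0).
    - exact: (filterS (fun y Wy => esym ((dF1 y i Wy).2 e)) (Wn z0 Wz0)).
    - exact ((dF1 z0 i Wz0).2 e).
    - exact (continuous_comp (cF e z0 Wz0) ((LP1 i).2 _)).
  split.
    apply: (@cont_near _ _ _ (fun _ => - e.2 0 i) z0).
    - exact: (filterS (fun y _ => esym ((dZ2 y i).2 e)) filterT).
    - exact ((dZ2 z0 i).2 e).
    - exact: cst_continuous.
  apply: (@cont_near _ _ _ (fun _ => e.1 0 i) z0).
  - exact: (filterS (fun y _ => esym ((dZ1 y i).2 e)) filterT).
  - exact ((dZ1 z0 i).2 e).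
  - exact: cst_continuous.
have K := @core R _ (n + n) A B S W z0 v1 v2 oW Wz0 HD HC.
have T1 : \sum_(i < n) ('d (A (lshift n i)) z0 v1 * 'd (B (lshift n i)) z0 v2
            - 'd (A (lshift n i)) z0 v2 * 'd (B (lshift n i)) z0 v1) =
          \sum_(i < n) (('d F z0 v1).2 0 i * ('d F z0 v2).1 0 i
            - ('d F z0 v2).2 0 i * ('d F z0 v1).1 0 i).
  apply: eq_bigr => i _; rewrite /A /B sl.
  congr (_ * _ - _ * _).
  - exact ((dF2 z0 i Wz0).2 v1).
  - exact ((dF1 z0 i Wz0).2 v2).
  - exact ((dF2 z0 i Wz0).2 v2).
  - exact ((dF1 z0 i Wz0).2 v1).
have T2 : \sum_(i < n) ('d (A (rshift n i)) z0 v1 * 'd (B (rshift n i)) z0 v2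
            - 'd (A (rshift n i)) z0 v2 * 'd (B (rshift n i)) z0 v1) =
          - \sum_(i < n) (v1.2 0 i * v2.1 0 i - v2.2 0 i * v1.1 0 i).
  rewrite -sumrN; apply: eq_bigr => i _; rewrite /A /B sr.
  transitivity ((- v1.2 0 i) * v2.1 0 i - (- v2.2 0 i) * v1.1 0 i).
    congr (_ * _ - _ * _).
    - exact ((dZ2 z0 i).2 v1).
    - exact ((dZ1 z0 i).2 v2).
    - exact ((dZ2 z0 i).2 v2).
    - exact ((dZ1 z0 i).2 v1).
  ring.
move: K; rewrite big_split_ord T1 T2 => K.
rewrite /omega /dotrv -!sumrB.
by apply/eqP; rewrite -subr_eq0; apply/eqP; exact K.
Qed.
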